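(* Let $Q=(q_n)_{n\ge1}$ be a basic sequence that is infinite in limit, let $k\in\mathbb{N}$, and let $x=E_0.E_1E_2\cdots$ (w.r.t. $Q$) be $Q$-normal of order $k$. Then there exists a real number $y=F_0.F_1F_2\cdots$ (w.r.t. $Q$) such that the set $\{n : E_n\neq F_n\}$ has natural density zero and $y\notin\bigcup_{j=1}^{\infty}\mathscr{N}_j(Q)$, i.e. $y$ is not $Q$-normal of order $j$ for any $j\ge1$.
   Context: A basic sequence is a sequence $Q=(q_n)_{n\ge1}$ of integers with $q_n\ge2$ for all $n$. The $Q$-Cantor series expansion of a real $x$ is the unique expansion $x=E_0+\sum_{n\ge1}\frac{E_n}{q_1\cdots q_n}$ with $E_0=\lfloor x\rfloor$, $E_n\in\{0,1,\dots,q_n-1\}$ for $n\ge1$, and $E_n\ne q_n-1$ for infinitely many $n$; this is written $x=E_0.E_1E_2\cdots$ w.r.t. $Q$. $Q$ is infinite in limit if $q_n\to\infty$. A block of length $k$ is a $k$-tuple $B=(b_1,\dots,b_k)$ of non-negative integers; $N_n^Q(B,x)$ denotes the number of indices $i\le n$ with $E_i=b_1,E_{i+1}=b_2,\dots,E_{i+k-1}=b_k$. Let $Q_n^{(k)}=\sum_{j=1}^n\frac{1}{q_jq_{j+1}\cdots q_{j+k-1}}$. A real $x$ is $Q$-normal of order $k$ if $\lim_{n\to\infty}N_n^Q(B,x)/Q_n^{(k)}=1$ for every block $B$ of length $k$; $\mathscr{N}_k(Q)$ denotes the set of such $x$. *)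

(* Defs.v *)
From Stdlib Require Import Reals ZArith List Lia Lra.
Open Scope R_scope.

(* A basic sequence Q = (q_n)_{n>=1} is a function q : nat -> nat;
   the value q 0 is irrelevant (indices start at 1). *)
Definition basic_seq (q : nat -> nat) : Prop :=
  forall n : nat, (1 <= n)%nat -> (2 <= q n)%nat.

Definition infinite_in_limit (q : nat -> nat) : Prop :=
  forall M : nat, exists N : nat, forall n : nat, (N <= n)%nat -> (M <= q n)%nat.

Fixpoint qprod (q : nat -> nat) (n : nat) : R :=
  match n with
  | O => 1
  | S m => qprod q m * INR (q (S m))
  end.

Definition cantor_expansion (q : nat -> nat) (x : R) (E : nat -> Z) : Prop :=
  E 0%nat = Int_part x /\ IZR (E 0%nat) <= x < IZR (E 0%nat) + 1 /\
  (forall n : nat, (1 <= n)%nat -> (0 <= E n < Z.of_nat (q n))%Z) /\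
  (forall m : nat, exists n : nat, (m < n)%nat /\ E n <> (Z.of_nat (q n) - 1)%Z) /\
  infinite_sum (fun n : nat => IZR (E (S n)) / qprod q (S n)) (x - IZR (E 0%nat)).

Fixpoint block_at (E : nat -> Z) (i : nat) (B : list nat) : bool :=
  match B with
  | nil => true
  | b :: B' => Z.eqb (E i) (Z.of_nat b) && block_at E (S i) B'
  end.

Fixpoint block_count (E : nat -> Z) (B : list nat) (n : nat) : nat :=
  match n with
  | O => O
  | S m => (block_count E B m + if block_at E (S m) B then 1 else 0)%nat
  end.

Fixpoint qwin (q : nat -> nat) (j k : nat) : R :=
  match k with
  | O => 1
  | S k' => INR (q j) * qwin q (S j) k'
  end.

Fixpoint Qk (q : nat -> nat) (k n : nat) : R :=
  match n with
  | O => 0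
  | S m => Qk q k m + / qwin q (S m) k
  end.

Definition normal_digits (q : nat -> nat) (k : nat) (E : nat -> Z) : Prop :=
  forall B : list nat, length B = k ->
    Un_cv (fun n => INR (block_count E B n) / Qk q k n) 1.

Definition Q_normal (q : nat -> nat) (k : nat) (x : R) : Prop :=
  exists E : nat -> Z, cantor_expansion q x E /\ normal_digits q k E.

Fixpoint count_upto (P : nat -> bool) (n : nat) : nat :=
  match n with
  | O => O
  | S m => (count_upto P m + if P (S m) then 1 else 0)%nat
  end.

Definition density_zero (P : nat -> bool) : Prop :=
  Un_cv (fun n => INR (count_upto P n) / INR n) 0.

(* Main.v *)
Require Import Defs.
From Stdlib Require Import Reals ZArith List Lia Lra Psatz.
From Stdlib Require Import IndefiniteDescription FunctionalExtensionality.
Open Scope R_scope.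

Lemma qprod_pos q : basic_seq q -> forall n, 0 < qprod q n.
Proof.
  intros Hq n; induction n; simpl. lra.
  apply Rmult_lt_0_compat; auto. apply lt_0_INR.
  assert (H := Hq (S n) ltac:(lia)); lia.
Qed.

Fixpoint Ps (q : nat -> nat) (D : nat -> Z) (n : nat) : R :=
  match n with O => 0 | S m => Ps q D m + IZR (D (S m)) / qprod q (S m) end.

Lemma sum_Ps q D n : sum_f_R0 (fun k => IZR (D (S k)) / qprod q (S k)) n = Ps q D (S n).
Proof. induction n. simpl. ring.
  rewrite tech5, IHn. simpl. ring. Qed.

Definition digits_ok q (D : nat -> Z) := forall n, (1 <= n)%nat -> (0 <= D n < Z.of_nat (q n))%Z.

Lemma IZR_le_INR_minus (d : Z) (n : nat) (c : Z) : (d <= Z.of_nat n - c)%Z -> IZR d <= INR n - IZR c.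
Proof. intros; rewrite INR_IZR_INZ, <- minus_IZR; apply IZR_le; lia. Qed.

Lemma term_le_gen q D m c : basic_seq q -> IZR (D (S m)) <= INR (q (S m)) - c ->
  IZR (D (S m)) / qprod q (S m) <= / qprod q m - c * / qprod q (S m).
Proof.
  intros Hq H. assert (HP := qprod_pos q Hq m).
  assert (HQ : 0 < INR (q (S m))) by (apply lt_0_INR; assert (H2 := Hq (S m) ltac:(lia)); lia).
  change (qprod q (S m)) with (qprod q m * INR (q (S m))).
  assert (E1 : / qprod q m = INR (q (S m)) * / (qprod q m * INR (q (S m)))) by (field; lra).
  rewrite E1. unfold Rdiv.
  assert (0 < / (qprod q m * INR (q (S m)))) by (apply Rinv_0_lt_compat; nra).
  nra.
Qed.

Lemma term_nonneg q D m : basic_seq q -> digits_ok q D -> 0 <= IZR (D (S m)) / qprod q (S m).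
Proof.
  intros Hq HD. unfold Rdiv. apply Rmult_le_pos.
  apply IZR_le. destruct (HD (S m)); lia.
  left; apply Rinv_0_lt_compat, qprod_pos; auto.
Qed.

Lemma term_le1 q D m : basic_seq q -> digits_ok q D ->
  IZR (D (S m)) / qprod q (S m) <= / qprod q m - / qprod q (S m).
Proof.
  intros Hq HD.
  assert (H := term_le_gen q D m 1 Hq ltac:(change 1 with (IZR 1); apply IZR_le_INR_minus;
     destruct (HD (S m)); lia)). lra.
Qed.

Lemma Ps_diff q D N d : basic_seq q -> digits_ok q D ->
  Ps q D (N + d) - Ps q D N <= / qprod q N - / qprod q (N + d).
Proof.
  intros Hq HD. induction d.
  - rewrite Nat.add_0_r; lra.
  - rewrite Nat.add_succ_r.
    change (Ps q D (S (N + d))) with (Ps q D (N + d) + IZR (D (S (N + d))) / qprod q (S (N + d))).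
    assert (H := term_le1 q D (N + d) Hq HD). lra.
Qed.

Lemma Ps_mono q D N d : basic_seq q -> digits_ok q D -> Ps q D N <= Ps q D (N + d).
Proof.
  intros Hq HD. induction d.
  - rewrite Nat.add_0_r; lra.
  - rewrite Nat.add_succ_r.
    change (Ps q D (S (N + d))) with (Ps q D (N + d) + IZR (D (S (N + d))) / qprod q (S (N + d))).
    assert (H := term_nonneg q D (N + d) Hq HD). lra.
Qed.

Lemma Ps_diff2 q D N a b : basic_seq q -> digits_ok q D ->
  (D (S (N + a)) + 2 <= Z.of_nat (q (S (N + a))))%Z ->
  Ps q D (S (N + a) + b) - Ps q D N <= / qprod q N - / qprod q (S (N + a) + b) - / qprod q (S (N + a)).
Proof.
  intros Hq HD H2.
  assert (A := Ps_diff q D N a Hq HD).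
  assert (B := Ps_diff q D (S (N + a)) b Hq HD).
  assert (C := term_le_gen q D (N + a) 2 Hq ltac:(change 2 with (IZR 2); apply IZR_le_INR_minus; lia)).
  change (Ps q D (S (N + a))) with (Ps q D (N + a) + IZR (D (S (N + a))) / qprod q (S (N + a))) in B.
  lra.
Qed.

Lemma cv_le u l c N0 : Un_cv u l -> (forall n, (N0 <= n)%nat -> u n <= c) -> l <= c.
Proof.
  intros H Hu. destruct (Rle_lt_dec l c) as [|Hlt]; auto.
  destruct (H (l - c)) as [N HN]; [lra|].
  specialize (HN (max N N0) (Nat.le_max_l _ _)). specialize (Hu (max N N0) (Nat.le_max_r _ _)).
  unfold R_dist in HN. apply Rabs_def2 in HN. lra.
Qed.

Lemma cv_ge u l c N0 : Un_cv u l -> (forall n, (N0 <= n)%nat -> c <= u n) -> c <= l.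
Proof.
  intros H Hu. destruct (Rle_lt_dec c l) as [|Hlt]; auto.
  destruct (H (c - l)) as [N HN]; [lra|].
  specialize (HN (max N N0) (Nat.le_max_l _ _)). specialize (Hu (max N N0) (Nat.le_max_r _ _)).
  unfold R_dist in HN. apply Rabs_def2 in HN. lra.
Qed.

Definition dinf q (D : nat -> Z) := forall m : nat, exists n : nat, (m < n)%nat /\ D n <> (Z.of_nat (q n) - 1)%Z.

Lemma L_ge q D L N : basic_seq q -> digits_ok q D -> Un_cv (fun n => Ps q D (S n)) L -> Ps q D N <= L.
Proof.
  intros Hq HD HL. apply (cv_ge _ _ _ N HL). intros n Hn.
  replace (S n) with (N + (S n - N))%nat by lia. apply Ps_mono; auto.
Qed.

Lemma L_lt q D L N : basic_seq q -> digits_ok q D -> dinf q D -> Un_cv (fun n => Ps q D (S n)) L ->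
  L < Ps q D N + / qprod q N.
Proof.
  intros Hq HD Hi HL. destruct (Hi N) as [n0 [Hn0 Hne]].
  assert (Hd := HD n0 ltac:(lia)).
  assert (H2 : (D (S (N + (n0 - N - 1))) + 2 <= Z.of_nat (q (S (N + (n0 - N - 1)))))%Z).
  { replace (S (N + (n0 - N - 1))) with n0 by lia. lia. }
  assert (Hp := qprod_pos q Hq n0).
  assert (L <= Ps q D N + / qprod q N - / qprod q n0).
  { apply (cv_le _ _ _ n0 HL). intros n Hn.
    assert (B := Ps_diff2 q D N (n0 - N - 1) (S n - n0) Hq HD H2).
    replace (S (N + (n0 - N - 1)) + (S n - n0))%nat with (S n) in B by lia.
    replace (S (N + (n0 - N - 1))) with n0 in B by lia.
    assert (0 < / qprod q (S n)) by (apply Rinv_0_lt_compat, qprod_pos; auto). lra. }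
  assert (0 < / qprod q n0) by (apply Rinv_0_lt_compat; auto). lra.
Qed.

Lemma Int_part_char r z : IZR z <= r < IZR z + 1 -> Int_part r = z.
Proof.
  intros H. unfold Int_part. rewrite <- (tech_up r (z + 1)). lia.
  rewrite plus_IZR; lra. rewrite plus_IZR; lra.
Qed.

Lemma isum_Ps q D l : infinite_sum (fun n => IZR (D (S n)) / qprod q (S n)) l <-> Un_cv (fun n => Ps q D (S n)) l.
Proof.
  split; intros H eps He; destruct (H eps He) as [N HN]; exists N; intros n Hn.
  rewrite <- sum_Ps; auto. rewrite sum_Ps; auto.
Qed.

Lemma Ps_ext q D D' n : (forall k, (k <= n)%nat -> D k = D' k) -> Ps q D n = Ps q D' n.
Proof.
  induction n; intros H; simpl; auto. rewrite IHn by (intros; apply H; lia). rewrite H; auto.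
Qed.

Lemma expansion_unique q y D D' : basic_seq q -> cantor_expansion q y D -> cantor_expansion q y D' ->
  forall n, D n = D' n.
Proof.
  intros Hq [H0 [_ [Hd [Hi Hs]]]] [H0' [_ [Hd' [Hi' Hs']]]].
  assert (E0 : D 0%nat = D' 0%nat) by congruence.
  rewrite E0 in Hs. apply isum_Ps in Hs. apply isum_Ps in Hs'.
  intro n. induction n as [n IH] using lt_wf_ind.
  destruct n as [|m]; auto.
  assert (HP : Ps q D m = Ps q D' m) by (apply Ps_ext; intros; apply IH; lia).
  assert (HQ := qprod_pos q Hq (S m)).
  assert (Hinv : 0 < / qprod q (S m)) by (apply Rinv_0_lt_compat; auto).
  destruct (Z.lt_total (D (S m)) (D' (S m))) as [Hl|[He|Hl]]; auto; exfalso.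
  - assert (A := L_lt q D _ (S m) Hq Hd Hi Hs).
    assert (B := L_ge q D' _ (S m) Hq Hd' Hs').
    change (Ps q D (S m)) with (Ps q D m + IZR (D (S m)) / qprod q (S m)) in *.
    change (Ps q D' (S m)) with (Ps q D' m + IZR (D' (S m)) / qprod q (S m)) in *.
    rewrite HP in *.
    assert (Hab : IZR (D (S m)) + 1 <= IZR (D' (S m))) by (rewrite <- plus_IZR; apply IZR_le; lia).
    assert (Hm := Rmult_le_compat_r _ _ _ (Rlt_le _ _ Hinv) Hab).
    unfold Rdiv in A, B. lra.
  - assert (A := L_lt q D' _ (S m) Hq Hd' Hi' Hs').
    assert (B := L_ge q D _ (S m) Hq Hd Hs).
    change (Ps q D (S m)) with (Ps q D m + IZR (D (S m)) / qprod q (S m)) in *.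
    change (Ps q D' (S m)) with (Ps q D' m + IZR (D' (S m)) / qprod q (S m)) in *.
    rewrite HP in *.
    assert (Hab : IZR (D' (S m)) + 1 <= IZR (D (S m))) by (rewrite <- plus_IZR; apply IZR_le; lia).
    assert (Hm := Rmult_le_compat_r _ _ _ (Rlt_le _ _ Hinv) Hab).
    unfold Rdiv in A, B. lra.
Qed.
From Stdlib Require Import Reals ZArith List Lia Lra Psatz Bool.
Open Scope nat_scope.

Fixpoint nseq (g : nat -> nat) (i : nat) : nat :=
  match i with
  | O => O
  | S i' => (S i' + 1) * (nseq g i' + 4 * g (4 * (S i' + 1)) + 2 * S i' + 1)
  end%nat.
Definition cseq g i := (nseq g (pred i) + 4 * g (4 * (i + 1)) + 2 * i + 1)%nat.
Lemma nseq_S g i : nseq g (S i) = ((S i + 1) * cseq g (S i))%nat. Proof. reflexivity. Qed.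
Lemma cseq_S g i : cseq g (S i) = (nseq g i + 4 * g (4 * (S i + 1)) + 2 * S i + 1)%nat.
Proof. reflexivity. Qed.

Definition inS (g : nat -> nat) (m : nat) : bool :=
  (existsb (fun l => Nat.leb 1 l && Nat.ltb (l * cseq g l) m && Nat.leb m (nseq g l)) (seq 0 m))%bool.

Lemma cseq_ge1 g l : (1 <= cseq g l)%nat. Proof. unfold cseq; lia. Qed.

Lemma inS_true g m l : (1 <= l)%nat -> (l * cseq g l < m)%nat -> (m <= nseq g l)%nat -> inS g m = true.
Proof.
  intros H1 H2 H3. unfold inS. apply existsb_exists. exists l. split.
  - apply in_seq. assert (H := cseq_ge1 g l). nia.
  - apply andb_true_intro; split; [apply andb_true_intro; split|].
    apply Nat.leb_le; lia. apply Nat.ltb_lt; lia. apply Nat.leb_le; lia.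
Qed.

Lemma nseq_ge g i : (i <= nseq g i)%nat.
Proof. destruct i; [lia|]. rewrite nseq_S, cseq_S. nia. Qed.

Lemma nseq_mono g i d : (nseq g i <= nseq g (i + d))%nat.
Proof.
  induction d. rewrite Nat.add_0_r; lia.
  rewrite Nat.add_succ_r, nseq_S, cseq_S. nia.
Qed.

Lemma inS_seg g i' m : (nseq g i' < m <= nseq g (S i'))%nat ->
  inS g m = Nat.ltb (S i' * cseq g (S i')) m.
Proof.
  intros Hm. destruct (Nat.ltb (S i' * cseq g (S i')) m) eqn:E.
  - apply Nat.ltb_lt in E. apply (inS_true g m (S i')); lia.
  - apply Nat.ltb_ge in E. apply Bool.not_true_is_false. intro H.
    unfold inS in H. apply existsb_exists in H. destruct H as [l [_ Hb]].
    apply andb_prop in Hb as [Hb H3]. apply andb_prop in Hb as [H1 H2].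
    apply Nat.leb_le in H1, H3. apply Nat.ltb_lt in H2.
    destruct (Nat.lt_total l (S i')) as [Hl|[Hl|Hl]].
    + assert (A := nseq_mono g l (i' - l)). replace (l + (i' - l))%nat with i' in A by lia. lia.
    + subst l. lia.
    + destruct l as [|l']; [lia|].
      assert (A := nseq_mono g (S i') (l' - S i')).
      replace (S i' + (l' - S i'))%nat with l' in A by lia.
      rewrite cseq_S in H2. nia.
Qed.

Lemma count_le P n : (count_upto P n <= n)%nat.
Proof. induction n; simpl; [lia|]. destruct (P (S n)); lia. Qed.

Lemma count_mono P P' n : (forall m, P m = true -> P' m = true) -> (count_upto P n <= count_upto P' n)%nat.
Proof.
  intros H. induction n; simpl; [lia|].
  destruct (P (S n)) eqn:E. rewrite (H _ E); lia. destruct (P' (S n)); lia.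
Qed.

Lemma count_seg g i' d : (nseq g i' + d <= nseq g (S i'))%nat ->
  count_upto (inS g) (nseq g i' + d) =
  (count_upto (inS g) (nseq g i') + (nseq g i' + d - S i' * cseq g (S i')))%nat.
Proof.
  set (c := cseq g (S i')). assert (Hn : nseq g (S i') = (S i' + 1) * c) by apply nseq_S.
  assert (Hc : (nseq g i' < c)%nat) by (unfold c; rewrite cseq_S; lia).
  assert (Hac : (c <= S i' * c)%nat) by nia.
  induction d; intros Hd.
  - rewrite Nat.add_0_r. lia.
  - rewrite Nat.add_succ_r. simpl count_upto. rewrite IHd by lia.
    rewrite (inS_seg g i') by lia. fold c.
    destruct (Nat.ltb_spec (S i' * c) (S (nseq g i' + d))); lia.
Qed.

Lemma seg_bound g i' n : (nseq g i' < n <= nseq g (S i'))%nat ->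
  (S i' * count_upto (inS g) n <= 3 * n)%nat.
Proof.
  intros Hn.
  assert (Hc := count_seg g i' (n - nseq g i') ltac:(lia)).
  replace (nseq g i' + (n - nseq g i'))%nat with n in Hc by lia.
  set (c := cseq g (S i')) in *. assert (Hn2 : nseq g (S i') = (S i' + 1) * c) by apply nseq_S.
  assert (Hprev : (S i' * count_upto (inS g) (nseq g i') <= 2 * nseq g i')%nat).
  { destruct i' as [|i''].
    - simpl. lia.
    - assert (Hc2 := count_seg g i'' (nseq g (S i'') - nseq g i'') ltac:(assert (A:= nseq_mono g i'' 1); rewrite Nat.add_1_r in A; lia)).
      replace (nseq g i'' + (nseq g (S i'') - nseq g i''))%nat with (nseq g (S i'')) in Hc2
        by (assert (A:= nseq_mono g i'' 1); rewrite Nat.add_1_r in A; lia).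
      set (c' := cseq g (S i'')) in *.
      assert (E' : nseq g (S i'') = (S i'' + 1) * c') by apply nseq_S.
      assert (Hlt : (nseq g i'' < c')%nat) by (unfold c'; rewrite cseq_S; lia).
      assert (Hcl := count_le (inS g) (nseq g i'')).
      assert (Hx : (nseq g (S i'') - S i'' * c' = c')%nat) by (rewrite E'; nia).
      rewrite Hx in Hc2. rewrite Hc2, E'. nia. }
  rewrite Hc.
  assert (Ht : (S i' * (n - S i' * c) <= n)%nat).
  { destruct (Nat.le_gt_cases n (S i' * c)).
    - replace (n - S i' * c)%nat with 0%nat by lia. lia.
    - set (t := (n - S i' * c)%nat). assert (n = S i' * c + t)%nat by lia.
      assert (t <= c)%nat by nia. assert (S i' * t <= S i' * c)%nat by (apply Nat.mul_le_mono_l; lia). lia. }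
  nia.
Qed.

Lemma tail_bound g i' n : (nseq g i' < n)%nat -> (S i' * count_upto (inS g) n <= 3 * n)%nat.
Proof.
  intros Hn.
  assert (K : forall d n, (nseq g i' < n <= nseq g (S i' + d))%nat -> (S i' * count_upto (inS g) n <= 3 * n)%nat).
  { induction d; intros m Hm.
    - rewrite Nat.add_0_r in Hm. apply seg_bound; auto.
    - destruct (Nat.le_gt_cases m (nseq g (S i' + d))).
      + apply IHd; lia.
      + assert (A := seg_bound g (S i' + d) m ltac:(rewrite <- Nat.add_succ_r; lia)). nia. }
  apply (K n). split; auto. assert (A := nseq_ge g (S i' + n)). lia.
Qed.

Lemma block_count_mono E B n d : (block_count E B n <= block_count E B (n + d))%nat.
Proof. induction d. rewrite Nat.add_0_r; lia. rewrite Nat.add_succ_r; simpl. lia. Qed.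

Lemma block_run E B a d : (forall p, (a < p <= a + d)%nat -> block_at E p B = true) ->
  (d <= block_count E B (a + d))%nat.
Proof.
  induction d; intros H; [lia|]. rewrite Nat.add_succ_r. simpl.
  rewrite (H (S (a + d))) by lia. assert (d <= block_count E B (a + d))%nat by (apply IHd; intros; apply H; lia). lia.
Qed.

Lemma block_at_zeros E j p : (forall t, (t < j)%nat -> E (p + t)%nat = 0%Z) -> block_at E p (repeat 0%nat j) = true.
Proof.
  revert p. induction j; intros p H; simpl; auto.
  rewrite (IHj (S p)). rewrite andb_true_r. apply Z.eqb_eq. rewrite <- (H 0%nat) by lia.
  rewrite Nat.add_0_r; reflexivity.
  intros t Ht. replace (S p + t)%nat with (p + S t)%nat by lia. apply H; lia.
Qed.
Open Scope R_scope.

Lemma qwin_ge1 q : basic_seq q -> forall j m, (1 <= m)%nat -> 1 <= qwin q m j.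
Proof.
  intros Hq j. induction j; intros m Hm; simpl. lra.
  assert (H := Hq m Hm). apply le_INR in H. assert (A := IHj (S m) ltac:(lia)).
  change (INR 2) with 2 in H. nra.
Qed.

Lemma qwin_ge_q q j m : basic_seq q -> (1 <= j)%nat -> (1 <= m)%nat -> INR (q m) <= qwin q m j.
Proof.
  intros Hq Hj Hm. destruct j as [|j']; [lia|]. simpl.
  assert (A := qwin_ge1 q Hq j' (S m) ltac:(lia)). assert (0 <= INR (q m)) by apply pos_INR. nra.
Qed.

Lemma Qk_nonneg q j n : basic_seq q -> 0 <= Qk q j n.
Proof.
  intros Hq. induction n; simpl. lra.
  assert (A := qwin_ge1 q Hq j (S n) ltac:(lia)).
  assert (0 < / qwin q (S n) j) by (apply Rinv_0_lt_compat; lra). lra.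
Qed.

Lemma Qk_pos q j n : basic_seq q -> (1 <= n)%nat -> 0 < Qk q j n.
Proof.
  intros Hq Hn. destruct n as [|m]; [lia|]. simpl.
  assert (B := Qk_nonneg q j m Hq).
  assert (A := qwin_ge1 q Hq j (S m) ltac:(lia)).
  assert (0 < / qwin q (S m) j) by (apply Rinv_0_lt_compat; lra). lra.
Qed.

Lemma Qk_bound q j M Nth : basic_seq q -> (1 <= j)%nat -> (1 <= M)%nat ->
  (forall m, (Nth <= m)%nat -> (M <= q m)%nat) ->
  forall n, Qk q j n <= INR (Nat.min n Nth) + INR n / INR M.
Proof.
  intros Hq Hj HM HN n. assert (HM' : 1 <= INR M) by (apply (le_INR 1); auto).
  induction n; simpl Qk.
  - simpl. unfold Rdiv. rewrite Rmult_0_l. lra.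
  - assert (A := qwin_ge1 q Hq j (S n) ltac:(lia)).
    assert (B := qwin_ge_q q j (S n) Hq Hj ltac:(lia)).
    rewrite S_INR. unfold Rdiv in *. rewrite Rmult_plus_distr_r, Rmult_1_l.
    destruct (Nat.le_gt_cases Nth (S n)).
    + assert (Hq1 := HN (S n) H). apply le_INR in Hq1.
      assert (/ qwin q (S n) j <= / INR M) by (apply Rinv_le_contravar; lra).
      assert (INR (Nat.min n Nth) <= INR (Nat.min (S n) Nth)) by (apply le_INR; lia). lra.
    + replace (Nat.min (S n) Nth) with (S n) by lia. replace (Nat.min n Nth) with n in IHn by lia.
      rewrite S_INR.
      assert (/ qwin q (S n) j <= / 1) by (apply Rinv_le_contravar; lra). rewrite Rinv_1 in H0.
      assert (0 <= / INR M) by (left; apply Rinv_0_lt_compat; lra). lra.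
Qed.

Lemma density_from g P : (forall m, P m = true -> inS g m = true) ->
  Un_cv (fun n => INR (count_upto P n) / INR n) 0.
Proof.
  intros HP eps He. destruct (archimed_cor1 (eps / 3) ltac:(lra)) as [i [Hi Hi0]].
  destruct i as [|i']; [lia|]. exists (S (nseq g i')). intros n Hn.
  assert (A := tail_bound g i' n ltac:(lia)).
  assert (B := count_mono P (inS g) n HP).
  assert (C : (S i' * count_upto P n <= 3 * n)%nat) by nia.
  apply le_INR in C. rewrite !mult_INR in C. replace (INR 3) with 3 in C by (simpl; lra).
  assert (Hn0 : 0 < INR n) by (apply lt_0_INR; lia).
  assert (Hi1 : 0 < INR (S i')) by (apply lt_0_INR; lia).
  assert (D0 : 0 <= INR (count_upto P n) / INR n) by (unfold Rdiv; apply Rmult_le_pos; [apply pos_INR|left; apply Rinv_0_lt_compat; lra]).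
  assert (D1 : INR (count_upto P n) / INR n <= 3 / INR (S i')).
  { apply Rmult_le_reg_r with (INR n * INR (S i')). nra.
    replace (INR (count_upto P n) / INR n * (INR n * INR (S i'))) with (INR (S i') * INR (count_upto P n)) by (field; lra).
    replace (3 / INR (S i') * (INR n * INR (S i'))) with (3 * INR n) by (field; lra). lra. }
  unfold R_dist. rewrite Rminus_0_r, Rabs_right by lra.
  assert (3 / INR (S i') = 3 * / INR (S i')) by reflexivity. lra.
Qed.

Theorem theorem3p1 (q : nat -> nat) (k : nat) (x : R) (E : nat -> Z) :
  basic_seq q -> infinite_in_limit q -> (1 <= k)%nat ->
  cantor_expansion q x E -> Q_normal q k x ->
  exists (y : R) (F : nat -> Z),
    cantor_expansion q y F /\
    density_zero (fun n => negb (Z.eqb (E n) (F n))) /\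
    (forall j : nat, (1 <= j)%nat -> ~ Q_normal q j y).
Proof.
  intros Hq Hinf _ HE _.
  assert (Hg : {g : nat -> nat | forall M n, (g M <= n)%nat -> (M <= q n)%nat}).
  { exists (fun M => proj1_sig (constructive_indefinite_description _ (Hinf M))).
    intros M n. destruct (constructive_indefinite_description _ (Hinf M)) as [N HN]; simpl; apply HN. }
  destruct Hg as [g Hg].
  destruct HE as [HE0 [HEb [HEd [HEinf HEs]]]].
  set (F := fun m => if inS g m then 0%Z else E m).
  assert (HF0 : F 0%nat = E 0%nat) by reflexivity.
  assert (HFd : digits_ok q F).
  { intros n Hn. unfold F. destruct (inS g n); auto. assert (H := Hq n Hn). lia. }
  assert (HFi : dinf q F).
  { intros m. exists (nseq g (S m)). assert (A := nseq_ge g (S m)). split; [lia|].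
    unfold F. rewrite (inS_true g _ (S m)); [| lia | | lia].
    - assert (H := Hq (nseq g (S m)) ltac:(lia)). lia.
    - rewrite nseq_S. assert (H := cseq_ge1 g (S m)). nia. }
  assert (Hgr : Un_growing (fun n => Ps q F (S n))).
  { intro n. change (Ps q F (S (S n))) with (Ps q F (S n) + IZR (F (S (S n))) / qprod q (S (S n))).
    assert (H := term_nonneg q F (S n) Hq HFd). lra. }
  assert (Hub : has_ub (fun n => Ps q F (S n))).
  { exists 1. intros r [i ->]. assert (H := Ps_diff q F 0 (S i) Hq HFd).
    change (0 + S i)%nat with (S i) in H. change (Ps q F 0) with 0 in H. change (qprod q 0) with 1 in H.
    assert (0 < / qprod q (S i)) by (apply Rinv_0_lt_compat, qprod_pos; auto).
    rewrite Rinv_1 in H. lra. }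
  destruct (growing_cv _ Hgr Hub) as [L HL].
  assert (L0 := L_ge q F L 0 Hq HFd HL). change (Ps q F 0) with 0 in L0.
  assert (L1 := L_lt q F L 0 Hq HFd HFi HL). change (Ps q F 0) with 0 in L1. change (qprod q 0) with 1 in L1. rewrite Rinv_1 in L1.
  set (y := IZR (E 0%nat) + L).
  assert (Hy : cantor_expansion q y F).
  { unfold cantor_expansion; rewrite HF0. split; [symmetry; apply Int_part_char; unfold y; lra|].
    split; [unfold y; lra|]. split; [exact HFd|]. split; [exact HFi|].
    apply isum_Ps. replace (y - IZR (E 0%nat)) with L by (unfold y; ring). exact HL. }
  exists y, F. split; [exact Hy|]. split.
  - apply (density_from g). intros m. unfold F. destruct (inS g m); auto.
    rewrite Z.eqb_refl. discriminate.
  - intros j Hj [F' [HF' Hn]].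
    assert (Heq : F' = F).
    { apply functional_extensionality; intro n. symmetry. apply (expansion_unique q y F F'); auto. }
    subst F'.
    specialize (Hn (repeat 0%nat j) (repeat_length _ _)).
    destruct (Hn (1/2)) as [N HN]; [lra|].
    set (i' := Nat.max N j).
    set (n := nseq g (S i')).
    assert (Hn1 : (S i' <= n)%nat) by apply nseq_ge.
    specialize (HN n ltac:(unfold i' in *; lia)).
    set (c := cseq g (S i')) in *.
    assert (Hnc : n = ((S i' + 1) * c)%nat) by apply nseq_S.
    set (Nth := g (4 * (S i' + 1))%nat).
    assert (Hcb : (4 * Nth + 2 * S i' + 1 <= c)%nat) by (unfold c; rewrite cseq_S; unfold Nth; lia).
    assert (Hji : (j <= S i')%nat) by (unfold i'; lia).
    assert (Hcount : (c + 1 - j <= block_count F (repeat 0%nat j) n)%nat).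
    { assert (R1 := block_run F (repeat 0%nat j) (S i' * c) (c + 1 - j)).
      assert (R2 := block_count_mono F (repeat 0%nat j) (S i' * c + (c + 1 - j)) (n - (S i' * c + (c + 1 - j)))).
      replace (S i' * c + (c + 1 - j) + (n - (S i' * c + (c + 1 - j))))%nat with n in R2 by nia.
      enough (c + 1 - j <= block_count F (repeat 0%nat j) (S i' * c + (c + 1 - j)))%nat by lia.
      apply R1. intros p Hp. apply block_at_zeros. intros t Ht. unfold F.
      rewrite (inS_true g (p + t) (S i')); auto; [lia|lia|]. fold n. nia. }
    apply le_INR in Hcount. rewrite minus_INR, plus_INR in Hcount by lia. simpl (INR 1) in Hcount.
    assert (HQ := Qk_bound q j (4 * (S i' + 1)) Nth Hq Hj ltac:(lia) (Hg _) n).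
    assert (Hmin : INR (Nat.min n Nth) <= INR Nth) by (apply le_INR; lia).
    assert (Hdiv : INR n / INR (4 * (S i' + 1)) = INR c / 4).
    { rewrite Hnc, !mult_INR. replace (INR 4) with 4 by (simpl; lra).
      assert (0 < INR (S i' + 1)) by (apply lt_0_INR; lia). field. lra. }
    apply le_INR in Hcb, Hji. rewrite !plus_INR, !mult_INR in Hcb.
    replace (INR 4) with 4 in Hcb by (simpl; lra). replace (INR 2) with 2 in Hcb by (simpl; lra).
    simpl (INR 1) in Hcb.
    assert (Hpos := Qk_pos q j n Hq ltac:(lia)).
    assert (H2 : 2 * Qk q j n <= INR (block_count F (repeat 0%nat j) n)) by lra.
    unfold R_dist in HN. apply Rabs_def2 in HN.
    assert (Hr : 2 <= INR (block_count F (repeat 0%nat j) n) / Qk q j n).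
    { apply Rmult_le_reg_r with (Qk q j n); auto. unfold Rdiv. rewrite Rmult_assoc, Rinv_l by lra. lra. }
    lra.
Qed.
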